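(* Let $\triangle ABC$ have side lengths $a=|BC|>b=|CA|>c=|AB|$ and angles $\alpha=\angle A$, $\beta=\angle B$, $\gamma=\angle C$, and suppose $60^\circ\le\beta<80^\circ$, $60^\circ<\alpha<90^\circ$, and $\alpha+\beta/2<120^\circ$. For $x\in\{a,b,c\}$ let $W_x$ denote the largest area of an equilateral triangle contained in the closed triangle $\triangle ABC$ having one of its sides lying on side $x$. Then the maximum of $W_a,W_b,W_c$ is attained on the short side $c$, and the minimum is attained on the middle side $b$.
   Context: An equilateral triangle of largest area contained in $\triangle ABC$ with one side lying on a given side of $\triangle ABC$ is called the wedged equilateral triangle (WET) on that side; it need not have all three vertices on the boundary of $\triangle ABC$. The max (resp. min) WET is the one of largest (resp. smallest) area among the three sides. *)

(* Defs.v *)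
From Stdlib Require Import Reals Lra.
Open Scope R_scope.

Definition pt := (R * R)%type.

Definition pdist (P Q : pt) : R :=
  sqrt ((fst P - fst Q) ^ 2 + (snd P - snd Q) ^ 2).

(* twice the signed area of triangle PQR *)
Definition det3 (P Q S : pt) : R :=
  (fst Q - fst P) * (snd S - snd P) - (snd Q - snd P) * (fst S - fst P).

Definition area (P Q S : pt) : R := Rabs (det3 P Q S) / 2.

Definition angle (V P Q : pt) : R :=
  acos (((fst P - fst V) * (fst Q - fst V) + (snd P - snd V) * (snd Q - snd V))
        / (pdist V P * pdist V Q)).

Definition on_seg (X Y M : pt) : Prop :=
  exists t, 0 <= t <= 1 /\
    M = ((1 - t) * fst X + t * fst Y, (1 - t) * snd X + t * snd Y).

Definition in_tri (A B C M : pt) : Prop :=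
  exists u v w, 0 <= u /\ 0 <= v /\ 0 <= w /\ u + v + w = 1 /\
    M = (u * fst A + v * fst B + w * fst C, u * snd A + v * snd B + w * snd C).

Definition equilateral (P Q S : pt) : Prop :=
  P <> Q /\ pdist P Q = pdist Q S /\ pdist Q S = pdist S P.

Definition wedged (A B C X Y P Q S : pt) : Prop :=
  equilateral P Q S /\
  (forall M, in_tri P Q S M -> in_tri A B C M) /\
  (forall M, on_seg P Q M -> on_seg X Y M).

Definition is_WET_area (A B C X Y : pt) (w : R) : Prop :=
  (exists P Q S, wedged A B C X Y P Q S /\ area P Q S = w) /\
  (forall P Q S, wedged A B C X Y P Q S -> area P Q S <= w).

(* Main.v *)
Require Import Defs.
From Stdlib Require Import Reals Lra Psatz.
Open Scope R_scope.

Lemma sq_nonneg_eq (x y : R) : 0 <= x -> 0 <= y -> x*x = y*y -> x = y.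
Proof. intros. nra. Qed.

Lemma pair_eq (a b c d : R) : a = c -> b = d -> (a, b) = (c, d).
Proof. intros; subst; reflexivity. Qed.

Lemma ss_nonneg (a b : R) : 0 <= a^2 + b^2.
Proof. apply Rplus_le_le_0_compat; apply pow2_ge_0. Qed.

Lemma pdist_sq (P Q : pt) : pdist P Q * pdist P Q = (fst P - fst Q)^2 + (snd P - snd Q)^2.
Proof. unfold pdist. apply sqrt_sqrt. apply Rplus_le_le_0_compat; apply pow2_ge_0. Qed.

Lemma equi_char (P Q S : pt) : equilateral P Q S ->
  exists k, k*k = 3/4 /\
   fst S = (fst P + fst Q)/2 - k*(snd Q - snd P) /\
   snd S = (snd P + snd Q)/2 + k*(fst Q - fst P).
Proof.
  destruct P as [px py], Q as [qx qy], S as [sx sy]. unfold equilateral, pdist; simpl.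
  intros [Hne [H1 H2]].
  apply sqrt_inj in H1; [|apply ss_nonneg|apply ss_nonneg].
  apply sqrt_inj in H2; [|apply ss_nonneg|apply ss_nonneg].
  set (dx := qx - px) in *. set (dy := qy - py).
  set (N := dx*dx+dy*dy).
  assert (HN : N > 0).
  { destruct (Req_dec dx 0) as [E|E]; [destruct (Req_dec dy 0) as [E'|E']|].
    - exfalso; apply Hne. apply pair_eq; unfold dx, dy in *; lra.
    - unfold N; nra.
    - unfold N; nra. }
  set (ex := sx - px). set (ey := sy - py).
  assert (Hs : ex*dx + ey*dy = N/2). { unfold ex, ey, N, dx, dy in *. nra. }
  assert (Hn : ex*ex + ey*ey = N). { unfold ex, ey, N, dx, dy in *. nra. }
  assert (HX : (dx*ey-dy*ex)*(dx*ey-dy*ex) = 3/4*(N*N)).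
  { assert ((dx*ey-dy*ex)*(dx*ey-dy*ex) = N*(ex*ex+ey*ey) - (ex*dx+ey*dy)*(ex*dx+ey*dy)) by (unfold N; ring).
    rewrite H, Hn, Hs. field. }
  assert (Hx : ex*N = dx*(ex*dx+ey*dy) - dy*(dx*ey-dy*ex)) by (unfold N; ring).
  assert (Hy : ey*N = dy*(ex*dx+ey*dy) + dx*(dx*ey-dy*ex)) by (unfold N; ring).
  exists ((dx*ey - dy*ex)/N).
  split; [|split].
  - unfold Rdiv. replace ((dx * ey - dy * ex) * / N * ((dx * ey - dy * ex) * / N))
      with ((dx*ey-dy*ex)*(dx*ey-dy*ex) * / (N*N)) by (field; lra).
    rewrite HX. field. lra.
  - assert (sx = px + ex) by (unfold ex; ring). rewrite H.
    apply (Rmult_eq_reg_r N); [|lra].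
    replace ((px + ex) * N) with (px*N + ex*N) by ring. rewrite Hx, Hs.
    unfold dx, dy. field. lra.
  - assert (sy = py + ey) by (unfold ey; ring). rewrite H.
    apply (Rmult_eq_reg_r N); [|lra].
    replace ((py + ey) * N) with (py*N + ey*N) by ring. rewrite Hy, Hs.
    unfold dx, dy. field. lra.
Qed.

Lemma sqrt3_sq : sqrt 3 * sqrt 3 = 3.
Proof. apply sqrt_sqrt; lra. Qed.

Lemma sqrt3_pos : 0 < sqrt 3.
Proof. apply sqrt_lt_R0; lra. Qed.

Lemma abs_k (k : R) : k*k = 3/4 -> Rabs k = sqrt 3 / 2.
Proof.
  intros Hk. apply sq_nonneg_eq.
  - apply Rabs_pos.
  - pose proof sqrt3_pos; lra.
  - rewrite <- Rabs_mult, Hk. pose proof sqrt3_sq. rewrite Rabs_pos_eq; lra.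
Qed.

Lemma equi_area (P Q S : pt) : equilateral P Q S ->
  area P Q S = sqrt 3 / 4 * ((fst Q - fst P)^2 + (snd Q - snd P)^2).
Proof.
  intros H. destruct (equi_char P Q S H) as [k [Hk [Hx Hy]]].
  unfold area, det3. rewrite Hx, Hy.
  destruct P as [px py], Q as [qx qy]; cbn [fst snd].
  replace ((qx - px) * ((py + qy) / 2 + k * (qx - px) - py) -
   (qy - py) * ((px + qx) / 2 - k * (qy - py) - px))
   with (k * ((qx - px)^2 + (qy - py)^2)) by field.
  rewrite Rabs_mult, abs_k by exact Hk.
  rewrite (Rabs_pos_eq (_ + _)) by apply ss_nonneg. field.
Qed.

Definition apex (P Q : pt) (k : R) : pt :=
  ((fst P + fst Q)/2 - k*(snd Q - snd P), (snd P + snd Q)/2 + k*(fst Q - fst P)).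

Lemma equi_intro (P Q : pt) (k : R) : P <> Q -> k*k = 3/4 -> equilateral P Q (apex P Q k).
Proof.
  intros Hne Hk. unfold equilateral, pdist, apex. split; [exact Hne|].
  destruct P as [px py], Q as [qx qy]; cbn [fst snd].
  assert (E1 : (qx - ((px + qx) / 2 - k * (qy - py)))^2 + (qy - ((py + qy) / 2 + k * (qx - px)))^2
    = ((px-qx)^2 + (py-qy)^2) * (1/4 + k*k)) by field.
  assert (E2 : ((px + qx) / 2 - k * (qy - py) - px)^2 + ((py + qy) / 2 + k * (qx - px) - py)^2
    = ((px-qx)^2 + (py-qy)^2) * (1/4 + k*k)) by field.
  rewrite E1, E2, Hk. split; f_equal; field.
Qed.

Lemma on_seg_sym (X Y M : pt) : on_seg X Y M -> on_seg Y X M.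
Proof.
  intros [t [Ht E]]. exists (1 - t). split; [lra|]. rewrite E. apply pair_eq; ring.
Qed.

Lemma on_seg_convex (X Y P Q M : pt) : on_seg X Y P -> on_seg X Y Q -> on_seg P Q M -> on_seg X Y M.
Proof.
  intros [p [Hp EP]] [q [Hq EQ]] [t [Ht EM]].
  exists ((1-t)*p + t*q). split; [nra|]. rewrite EM, EP, EQ. simpl. apply pair_eq; ring.
Qed.

Lemma in_tri_cyc (A B C M : pt) : in_tri A B C M -> in_tri B C A M.
Proof.
  intros (u & v & w & Hu & Hv & Hw & Hs & E). exists v, w, u. repeat split; try lra.
  rewrite E. apply pair_eq; ring.
Qed.

Lemma in_tri_swap (A B C M : pt) : in_tri A B C M -> in_tri B A C M.
Proof.
  intros (u & v & w & Hu & Hv & Hw & Hs & E). exists v, u, w. repeat split; try lra.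
  rewrite E. apply pair_eq; ring.
Qed.

Lemma in_tri_convex (A B C P Q S M : pt) : in_tri A B C P -> in_tri A B C Q -> in_tri A B C S ->
  in_tri P Q S M -> in_tri A B C M.
Proof.
  intros (u1 & v1 & w1 & Hu1 & Hv1 & Hw1 & Hs1 & E1)
         (u2 & v2 & w2 & Hu2 & Hv2 & Hw2 & Hs2 & E2)
         (u3 & v3 & w3 & Hu3 & Hv3 & Hw3 & Hs3 & E3)
         (u & v & w & Hu & Hv & Hw & Hs & E).
  exists (u*u1+v*u2+w*u3), (u*v1+v*v2+w*v3), (u*w1+v*w2+w*w3).
  repeat split; try nra.
  rewrite E, E1, E2, E3. simpl. apply pair_eq; ring.
Qed.

Lemma in_tri_vert1 (A B C : pt) : in_tri A B C A.
Proof. exists 1, 0, 0. repeat split; try lra. destruct A; simpl; apply pair_eq; ring. Qed.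
Lemma in_tri_vert2 (A B C : pt) : in_tri A B C B.
Proof. exists 0, 1, 0. repeat split; try lra. destruct B; simpl; apply pair_eq; ring. Qed.
Lemma in_tri_vert3 (A B C : pt) : in_tri A B C C.
Proof. exists 0, 0, 1. repeat split; try lra. destruct C; simpl; apply pair_eq; ring. Qed.


Lemma ub_core (p q v w k D g L2 : R) : 0<=p<=1 -> 0<=q<=1 -> 0<=v -> 0<=w -> k*k=3/4 -> D<>0 ->
  0<L2 -> 0 < Rabs D + sqrt 3*g -> w*D = k*(q-p)*L2 -> v*D = (p+q)/2*D - k*(q-p)*g ->
  (q-p)^2 * (Rabs D + sqrt 3*g)^2 <= 4*D^2.
Proof.
  intros Hp Hq Hv Hw Hk HD HL Hden W1 V1.
  assert (Hn : exists n, n = k*(q-p)) by (eexists; reflexivity). destruct Hn as [n Hn].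
  rewrite <- Hn in W1, V1.
  assert (HDD : 0 < D*D) by (destruct (Rlt_or_le D 0); nra).
  assert (HnD : 0 <= n*D).
  { assert (E : w*(D*D) = (n*D)*L2) by (rewrite <- Rmult_assoc, W1; ring).
    assert (0 <= w*(D*D)) by nra.
    destruct (Rlt_or_le (n*D) 0); nra. }
  assert (Hd : Rabs D*Rabs D = D*D) by (rewrite <- Rabs_mult; apply Rabs_pos_eq; apply Rle_0_sqr).
  assert (Hr : Rabs (q-p)*Rabs (q-p) = (q-p)*(q-p)) by (rewrite <- Rabs_mult; apply Rabs_pos_eq; apply Rle_0_sqr).
  assert (Hd0 : 0 < Rabs D) by (apply Rabs_pos_lt; exact HD).
  assert (Hr0 : 0 <= Rabs (q-p)) by (apply Rabs_pos).
  assert (Hm : (p+q)/2 <= 1 - Rabs (q-p)/2).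
  { unfold Rabs; destruct (Rcase_abs (q-p)); lra. }
  generalize dependent (Rabs D). intros d Hden Hd Hd0.
  generalize dependent (Rabs (q-p)). intros r Hr Hr0 Hm.
  pose proof sqrt3_sq as S3. pose proof sqrt3_pos as S3p.
  assert (HnD2 : n*D = sqrt 3 / 2 * r * d).
  { apply sq_nonneg_eq; [exact HnD| repeat apply Rmult_le_pos; lra |].
    replace (n*D*(n*D)) with ((k*k)*((q-p)*(q-p))*(D*D)) by (rewrite Hn; ring).
    rewrite Hk, <- Hr, <- Hd.
    replace (sqrt 3 / 2 * r * d * (sqrt 3 / 2 * r * d)) with ((sqrt 3 * sqrt 3)/4 * (r*r)*(d*d)) by field.
    rewrite S3. field. }
  assert (E2 : v*(D*D) = (p+q)/2*(D*D) - (n*D)*g) by (rewrite <- Rmult_assoc, V1; ring).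
  assert (0 <= v*(D*D)) by nra.
  rewrite HnD2, <- Hd in E2.
  assert (Hk1 : (1 - r/2) * (d*d) >= sqrt 3 / 2 * r * d * g) by nra.
  assert (Hk2 : (1 - r/2) * d >= sqrt 3 / 2 * r * g).
  { apply Rle_ge; apply Rmult_le_reg_r with d; [lra| nra]. }
  assert (Hk3 : r * (d + sqrt 3 * g) <= 2*d) by nra.
  assert (0 <= r * (d + sqrt 3 * g)) by nra.
  replace ((q-p)^2 * (d + sqrt 3*g)^2) with ((r * (d + sqrt 3 * g))*(r * (d + sqrt 3 * g))) by (replace ((q-p)^2) with (r*r) by (rewrite Hr; ring); ring).
  assert (H4 : 4*D^2 = (2*d)*(2*d)) by (replace (D^2) with (D*D) by ring; rewrite <- Hd; ring).
  rewrite H4. apply Rmult_le_compat; lra.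
Qed.

Definition dotv (O Y Z : pt) := (fst Y - fst O)*(fst Z - fst O) + (snd Y - snd O)*(snd Z - snd O).
Definition sqd (P Q : pt) := (fst Q - fst P)^2 + (snd Q - snd P)^2.

Lemma ub_geo (O Y Z P Q S : pt) : det3 O Y Z <> 0 ->
  0 < Rabs (det3 O Y Z) + sqrt 3 * dotv O Y Z ->
  on_seg O Y P -> on_seg O Y Q -> in_tri O Y Z S -> equilateral P Q S ->
  sqd P Q * (Rabs (det3 O Y Z) + sqrt 3 * dotv O Y Z)^2 <= 4 * sqd O Y * (det3 O Y Z)^2.
Proof.
  intros HD Hden HP HQ HS He.
  destruct (equi_char P Q S He) as [k [Hk [Hx Hy]]].
  destruct HP as [p [Hp EP]]. destruct HQ as [q [Hq EQ]].
  destruct HS as (u & v & w & Hu & Hv & Hw & Hs & ES).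
  subst P Q S. destruct O as [ox oy], Y as [yx yy], Z as [zx zy].
  unfold det3, dotv, sqd in *. cbn [fst snd] in *.
  assert (u = 1 - v - w) by lra. subst u.
  set (ex := yx - ox) in *. set (ey := yy - oy) in *. set (fx := zx - ox) in *. set (fy := zy - oy) in *.
  assert (X0 : v*ex + w*fx - ((p+q)/2*ex - k*(q-p)*ey) = 0) by (unfold ex, ey, fx, fy in *; lra).
  assert (Y0 : v*ey + w*fy - ((p+q)/2*ey + k*(q-p)*ex) = 0) by (unfold ex, ey, fx, fy in *; lra).
  assert (A1 : ex * (v*ey + w*fy - ((p+q)/2*ey + k*(q-p)*ex)) = 0) by (rewrite Y0; ring).
  assert (A2 : ey * (v*ex + w*fx - ((p+q)/2*ex - k*(q-p)*ey)) = 0) by (rewrite X0; ring).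
  assert (A3 : fy * (v*ex + w*fx - ((p+q)/2*ex - k*(q-p)*ey)) = 0) by (rewrite X0; ring).
  assert (A4 : fx * (v*ey + w*fy - ((p+q)/2*ey + k*(q-p)*ex)) = 0) by (rewrite Y0; ring).
  assert (W1 : w*(ex*fy - ey*fx) = k*(q-p)*(ex^2+ey^2)) by lra.
  assert (V1 : v*(ex*fy - ey*fx) = (p+q)/2*(ex*fy - ey*fx) - k*(q-p)*(ex*fx+ey*fy)) by lra.
  assert (HL : 0 < ex^2+ey^2).
  { destruct (Req_dec ex 0); [destruct (Req_dec ey 0)|].
    - exfalso. apply HD. subst. rewrite H, H0. ring.
    - nra.
    - nra. }
  pose proof (ub_core p q v w k (ex*fy - ey*fx) (ex*fx+ey*fy) (ex^2+ey^2) Hp Hq Hv Hw Hk HD HL Hden W1 V1) as U.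
  replace (((1 - q) * ox + q * yx - ((1 - p) * ox + p * yx)) ^ 2 +
   ((1 - q) * oy + q * yy - ((1 - p) * oy + p * yy)) ^ 2) with ((ex^2+ey^2) * (q-p)^2) by (unfold ex, ey; ring).
  apply Rle_trans with ((ex^2+ey^2) * (4*(ex * fy - ey * fx)^2)); [rewrite Rmult_assoc; apply Rmult_le_compat_l; lra | right; ring].
Qed.

Definition pt_on (O Y : pt) (t : R) : pt := ((1-t)*fst O + t*fst Y, (1-t)*snd O + t*snd Y).

Lemma sumsq_pos (a b : R) : a <> 0 \/ b <> 0 -> 0 < a^2 + b^2.
Proof.
  intros [H|H].
  - pose proof (Rsqr_pos_lt a H). pose proof (pow2_ge_0 b). unfold Rsqr in *. nra.
  - pose proof (Rsqr_pos_lt b H). pose proof (pow2_ge_0 a). unfold Rsqr in *. nra.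
Qed.

Lemma L2_pos (O Y Z : pt) : det3 O Y Z <> 0 -> 0 < sqd O Y.
Proof.
  intros HD. destruct O as [ox oy], Y as [yx yy], Z as [zx zy]. unfold det3, sqd in *; cbn [fst snd] in *.
  destruct (Req_dec (yx-ox) 0) as [E1|E1]; [destruct (Req_dec (yy-oy) 0) as [E2|E2]|].
  - exfalso. apply HD. rewrite E1, E2. ring.
  - apply sumsq_pos; auto.
  - apply sumsq_pos; auto.
Qed.

Lemma construct (O Y Z : pt) (p q k : R) : det3 O Y Z <> 0 -> 0<=p<=1 -> 0<=q<=1 -> p<>q -> k*k = 3/4 ->
  0 <= (p+q)/2 - k*(q-p)*dotv O Y Z/det3 O Y Z ->
  0 <= k*(q-p)*sqd O Y/det3 O Y Z ->
  (p+q)/2 - k*(q-p)*dotv O Y Z/det3 O Y Z + k*(q-p)*sqd O Y/det3 O Y Z <= 1 ->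
  equilateral (pt_on O Y p) (pt_on O Y q) (apex (pt_on O Y p) (pt_on O Y q) k) /\
  on_seg O Y (pt_on O Y p) /\ on_seg O Y (pt_on O Y q) /\
  in_tri O Y Z (pt_on O Y p) /\ in_tri O Y Z (pt_on O Y q) /\
  in_tri O Y Z (apex (pt_on O Y p) (pt_on O Y q) k) /\
  sqd (pt_on O Y p) (pt_on O Y q) = (q-p)^2 * sqd O Y.
Proof.
  intros HD Hp Hq Hpq Hk Hv Hw Hvw.
  pose proof (L2_pos O Y Z HD) as HL.
  split; [|split; [|split; [|split; [|split; [|split]]]]].
  - apply equi_intro; [|exact Hk].
    destruct O as [ox oy], Y as [yx yy]. unfold pt_on, sqd in *; cbn [fst snd] in *.
    intro E. injection E as E1 E2.
    assert ((q-p)*(yx-ox) = 0) by lra. assert ((q-p)*(yy-oy) = 0) by lra.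
    apply Rmult_integral in H. apply Rmult_integral in H0.
    destruct H; [lra|]. destruct H0; [lra|]. rewrite H, H0 in HL. lra.
  - exists p. split; [lra|reflexivity].
  - exists q. split; [lra|reflexivity].
  - exists (1-p), p, 0. repeat split; try lra. unfold pt_on. apply pair_eq; ring.
  - exists (1-q), q, 0. repeat split; try lra. unfold pt_on. apply pair_eq; ring.
  - set (v := (p+q)/2 - k*(q-p)*dotv O Y Z/det3 O Y Z) in *.
    set (w := k*(q-p)*sqd O Y/det3 O Y Z) in *.
    exists (1 - v - w), v, w. repeat split; try lra.
    unfold v, w. destruct O as [ox oy], Y as [yx yy], Z as [zx zy].
    unfold apex, pt_on, dotv, sqd, det3 in *; cbn [fst snd] in *.
    apply pair_eq; field; exact HD.
  - destruct O as [ox oy], Y as [yx yy]. unfold pt_on, sqd; cbn [fst snd]. ring.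
Qed.

Lemma exist_corner (O Y Z : pt) : det3 O Y Z <> 0 ->
  Rabs (det3 O Y Z) <= sqrt 3 * dotv O Y Z ->
  sqrt 3 * (sqd O Y - dotv O Y Z) <= Rabs (det3 O Y Z) ->
  exists P Q S, equilateral P Q S /\ on_seg O Y P /\ on_seg O Y Q /\
    in_tri O Y Z P /\ in_tri O Y Z Q /\ in_tri O Y Z S /\
    sqd P Q = 4 * sqd O Y * (det3 O Y Z)^2 / (Rabs (det3 O Y Z) + sqrt 3 * dotv O Y Z)^2.
Proof.
  intros HD H1 H2.
  pose proof (L2_pos O Y Z HD) as HL.
  assert (Hd : Rabs (det3 O Y Z) * Rabs (det3 O Y Z) = det3 O Y Z * det3 O Y Z)
    by (rewrite <- Rabs_mult; apply Rabs_pos_eq; apply Rle_0_sqr).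
  assert (Hd0 : 0 < Rabs (det3 O Y Z)) by (apply Rabs_pos_lt; exact HD).
  pose proof sqrt3_sq as S3. pose proof sqrt3_pos as S3p.
  set (k := - (sqrt 3 / 2) * (det3 O Y Z / Rabs (det3 O Y Z))).
  set (t := 2 * Rabs (det3 O Y Z) / (Rabs (det3 O Y Z) + sqrt 3 * dotv O Y Z)).
  assert (Hden : 0 < Rabs (det3 O Y Z) + sqrt 3 * dotv O Y Z) by lra.
  assert (Ht0 : 0 < t) by (unfold t; apply Rdiv_lt_0_compat; lra).
  assert (Ht1 : t <= 1).
  { unfold t. apply (Rmult_le_reg_r (Rabs (det3 O Y Z) + sqrt 3 * dotv O Y Z)); [lra|].
    unfold Rdiv. rewrite Rmult_assoc, Rinv_l; lra. }
  assert (Hk : k*k = 3/4).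
  { unfold k. replace (- (sqrt 3 / 2) * (det3 O Y Z / Rabs (det3 O Y Z)) *
      (- (sqrt 3 / 2) * (det3 O Y Z / Rabs (det3 O Y Z)))) with
      ((sqrt 3 * sqrt 3) / 4 * (det3 O Y Z * det3 O Y Z) / (Rabs (det3 O Y Z) * Rabs (det3 O Y Z))) by (field; lra).
    rewrite S3, Hd. field. exact HD. }
  assert (Ev : (1 + (1-t))/2 - k*((1-t)-1)*dotv O Y Z/det3 O Y Z = 0).
  { unfold k, t. field. split; [lra|split; [lra|exact HD]]. }
  assert (Ew : k*((1-t)-1)*sqd O Y/det3 O Y Z = sqrt 3 * sqd O Y / (Rabs (det3 O Y Z) + sqrt 3 * dotv O Y Z)).
  { unfold k, t. field. split; [lra|split; [lra|exact HD]]. }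
  destruct (construct O Y Z 1 (1-t) k HD ltac:(lra) ltac:(lra) ltac:(lra) Hk) as (He & HP & HQ & HP' & HQ' & HS & Hsq).
  - rewrite Ev; lra.
  - rewrite Ew. apply Rmult_le_pos; [apply Rmult_le_pos; lra|]. left; apply Rinv_0_lt_compat; lra.
  - rewrite Ev, Ew, Rplus_0_l. apply (Rmult_le_reg_r (Rabs (det3 O Y Z) + sqrt 3 * dotv O Y Z)); [lra|].
    unfold Rdiv. rewrite Rmult_assoc, Rinv_l; lra.
  - exists (pt_on O Y 1), (pt_on O Y (1-t)), (apex (pt_on O Y 1) (pt_on O Y (1-t)) k).
    split; [exact He|]. do 5 (split; [assumption|]).
    rewrite Hsq. unfold t.
    replace (det3 O Y Z ^2) with (Rabs (det3 O Y Z) * Rabs (det3 O Y Z)) by (rewrite Hd; ring).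
    field. lra.
Qed.

Lemma exist_full (O Y Z : pt) : det3 O Y Z <> 0 ->
  sqrt 3 * dotv O Y Z <= Rabs (det3 O Y Z) ->
  sqrt 3 * (sqd O Y - dotv O Y Z) <= Rabs (det3 O Y Z) ->
  exists P Q S, equilateral P Q S /\ on_seg O Y P /\ on_seg O Y Q /\
    in_tri O Y Z P /\ in_tri O Y Z Q /\ in_tri O Y Z S /\
    sqd P Q = sqd O Y.
Proof.
  intros HD H1 H2.
  pose proof (L2_pos O Y Z HD) as HL.
  assert (Hd : Rabs (det3 O Y Z) * Rabs (det3 O Y Z) = det3 O Y Z * det3 O Y Z)
    by (rewrite <- Rabs_mult; apply Rabs_pos_eq; apply Rle_0_sqr).
  assert (Hd0 : 0 < Rabs (det3 O Y Z)) by (apply Rabs_pos_lt; exact HD).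
  pose proof sqrt3_sq as S3. pose proof sqrt3_pos as S3p.
  set (k := (sqrt 3 / 2) * (det3 O Y Z / Rabs (det3 O Y Z))).
  assert (Hk : k*k = 3/4).
  { unfold k. replace ((sqrt 3 / 2) * (det3 O Y Z / Rabs (det3 O Y Z)) *
      ((sqrt 3 / 2) * (det3 O Y Z / Rabs (det3 O Y Z)))) with
      ((sqrt 3 * sqrt 3) / 4 * (det3 O Y Z * det3 O Y Z) / (Rabs (det3 O Y Z) * Rabs (det3 O Y Z))) by (field; lra).
    rewrite S3, Hd. field. exact HD. }
  assert (Ev : (0 + 1)/2 - k*(1-0)*dotv O Y Z/det3 O Y Z = 1/2 - sqrt 3 * dotv O Y Z / (2 * Rabs (det3 O Y Z))).
  { unfold k. field. split; [lra|exact HD]. }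
  assert (Ew : k*(1-0)*sqd O Y/det3 O Y Z = sqrt 3 * sqd O Y / (2 * Rabs (det3 O Y Z))).
  { unfold k. field. split; [lra|exact HD]. }
  assert (Hv : 0 <= 1/2 - sqrt 3 * dotv O Y Z / (2 * Rabs (det3 O Y Z))).
  { assert (sqrt 3 * dotv O Y Z / (2 * Rabs (det3 O Y Z)) <= 1/2); [|lra].
    apply (Rmult_le_reg_r (2 * Rabs (det3 O Y Z))); [lra|].
    unfold Rdiv. rewrite Rmult_assoc, Rinv_l; lra. }
  assert (Hw : 0 <= sqrt 3 * sqd O Y / (2 * Rabs (det3 O Y Z))).
  { apply Rmult_le_pos; [apply Rmult_le_pos; lra|]. left; apply Rinv_0_lt_compat; lra. }
  assert (Hvw : 1/2 - sqrt 3 * dotv O Y Z / (2 * Rabs (det3 O Y Z)) + sqrt 3 * sqd O Y / (2 * Rabs (det3 O Y Z)) <= 1).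
  { replace (1/2 - sqrt 3 * dotv O Y Z / (2 * Rabs (det3 O Y Z)) + sqrt 3 * sqd O Y / (2 * Rabs (det3 O Y Z)))
      with (1/2 + sqrt 3 * (sqd O Y - dotv O Y Z) / (2 * Rabs (det3 O Y Z))) by (field; lra).
    assert (sqrt 3 * (sqd O Y - dotv O Y Z) / (2 * Rabs (det3 O Y Z)) <= 1/2); [|lra].
    apply (Rmult_le_reg_r (2 * Rabs (det3 O Y Z))); [lra|].
    unfold Rdiv. rewrite Rmult_assoc, Rinv_l; lra. }
  destruct (construct O Y Z 0 1 k HD ltac:(lra) ltac:(lra) ltac:(lra) Hk) as (He & HP & HQ & HP' & HQ' & HS & Hsq).
  - rewrite Ev; lra.
  - rewrite Ew; lra.
  - rewrite Ev, Ew; lra.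
  - exists (pt_on O Y 0), (pt_on O Y 1), (apex (pt_on O Y 0) (pt_on O Y 1) k).
    split; [exact He|]. do 5 (split; [assumption|]).
    rewrite Hsq. ring.
Qed.

Lemma ub_full (X Y P Q : pt) : on_seg X Y P -> on_seg X Y Q -> sqd P Q <= sqd X Y.
Proof.
  intros [p [Hp EP]] [q [Hq EQ]]. subst P Q. destruct X as [x1 x2], Y as [y1 y2].
  unfold sqd; cbn [fst snd].
  replace (((1 - q) * x1 + q * y1 - ((1 - p) * x1 + p * y1)) ^ 2 +
    ((1 - q) * x2 + q * y2 - ((1 - p) * x2 + p * y2)) ^ 2) with ((q-p)^2 * ((y1-x1)^2 + (y2-x2)^2)) by ring.
  pose proof (ss_nonneg (y1-x1) (y2-x2)).
  assert ((q-p)^2 <= 1) by nra.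
  nra.
Qed.


Lemma le_of_sq (x y : R) : 0 <= y -> x*x <= y*y -> x <= y.
Proof. intros. destruct (Rle_or_lt x y); [auto|nra]. Qed.

Lemma cos_acos' (x : R) : -1 <= x <= 1 -> cos (acos x) = x.
Proof. apply cos_acos. Qed.

Lemma sin_acos_D (d D u v : R) : 0 < u -> 0 < v -> D*D + d*d = (u*v)*(u*v) ->
  sin (acos (d/(u*v))) = Rabs D / (u*v).
Proof.
  intros Hu Hv E.
  assert (Huv : 0 < u*v) by nra.
  assert (Hd2 : d*d <= (u*v)*(u*v)) by nra.
  assert (Hb : -1 <= d/(u*v) <= 1).
  { split.
    - apply (Rmult_le_reg_r (u*v)); [lra|]. unfold Rdiv; rewrite Rmult_assoc, Rinv_l by lra. nra.
    - apply (Rmult_le_reg_r (u*v)); [lra|]. unfold Rdiv; rewrite Rmult_assoc, Rinv_l by lra. nra. }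
  rewrite sin_acos by exact Hb. apply sqrt_lem_1.
  - unfold Rsqr. assert (d/(u*v)*(d/(u*v)) <= 1); [|lra].
    replace (d/(u*v)*(d/(u*v))) with ((d*d)/((u*v)*(u*v))) by (field; lra).
    apply (Rmult_le_reg_r ((u*v)*(u*v))); [nra|]. unfold Rdiv; rewrite Rmult_assoc, Rinv_l by nra. lra.
  - apply Rmult_le_pos; [apply Rabs_pos|]. left; apply Rinv_0_lt_compat; lra.
  - unfold Rsqr. replace (Rabs D / (u*v) * (Rabs D / (u*v))) with ((Rabs D * Rabs D)/((u*v)*(u*v))) by (field; lra).
    rewrite <- Rabs_mult, Rabs_pos_eq by apply Rle_0_sqr.
    replace (D*D) with ((u*v)*(u*v) - d*d) by lra. field. lra.
Qed.

Lemma cos_acos_D (d D u v : R) : 0 < u -> 0 < v -> D*D + d*d = (u*v)*(u*v) ->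
  cos (acos (d/(u*v))) = d / (u*v).
Proof.
  intros Hu Hv E.
  assert (Huv : 0 < u*v) by nra.
  apply cos_acos. split.
  - apply (Rmult_le_reg_r (u*v)); [lra|]. unfold Rdiv; rewrite Rmult_assoc, Rinv_l by lra. nra.
  - apply (Rmult_le_reg_r (u*v)); [lra|]. unfold Rdiv; rewrite Rmult_assoc, Rinv_l by lra. nra.
Qed.

Lemma trig_facts (a b c D dA dB g : R) :
 0<a -> 0<b -> 0<c -> D<>0 ->
 D*D + dA*dA = (c*b)*(c*b) -> D*D + dB*dB = (a*c)*(a*c) -> dA + dB = c*c ->
 dA*dB - D*D = -(g*(c*c)) -> D*D + g*g = (a*b)*(a*b) ->
 PI/3 <= acos (dB/(a*c)) -> acos (dB/(a*c)) < 4*PI/9 ->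
 PI/3 < acos (dA/(c*b)) -> acos (dA/(c*b)) < PI/2 ->
 acos (dA/(c*b)) + acos (dB/(a*c)) / 2 < 2*PI/3 ->
 sqrt 3 * dA <= Rabs D /\ sqrt 3 * dB <= Rabs D /\ Rabs D <= sqrt 3 * g /\ 0 < g /\
 2*a*Rabs D <= c*(Rabs D + sqrt 3 * g).
Proof.
  intros Ha Hb Hc HD E1 E2 E3 E4 E5 Hb1 Hb2 Ha1 Ha2 H12.
  pose proof (cos_acos_D dA D c b Hc Hb E1) as CA.
  pose proof (sin_acos_D dA D c b Hc Hb E1) as SA.
  pose proof (cos_acos_D dB D a c Ha Hc E2) as CB.
  pose proof (sin_acos_D dB D a c Ha Hc E2) as SB.
  pose proof (acos_bound (dA/(c*b))) as BA.
  pose proof (acos_bound (dB/(a*c))) as BB.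
  generalize dependent (acos (dA/(c*b))). intros al Ha1 Ha2 H12 CA SA BA.
  generalize dependent (acos (dB/(a*c))). intros be Hb1 Hb2 CB SB BB H12.
  pose proof PI_RGT_0 as HPI.
  pose proof sqrt3_sq as S3. pose proof sqrt3_pos as S3p.
  assert (Hdd : Rabs D * Rabs D = D*D) by (rewrite <- Rabs_mult; apply Rabs_pos_eq; apply Rle_0_sqr).
  assert (Hd0 : 0 < Rabs D) by (apply Rabs_pos_lt; exact HD).
  assert (F1 : sqrt 3 * dA <= Rabs D).
  { assert (C1 : cos al < 1/2).
    { pose proof cos_PI3 as CP. assert (cos al < cos (PI/3)) by (apply cos_decreasing_1; lra). lra. }
    rewrite CA in C1.
    assert (dA < c*b/2).
    { apply (Rmult_lt_reg_r (/(c*b))). apply Rinv_0_lt_compat; nra.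
      replace (c*b/2 * /(c*b)) with (1/2) by (field; lra). exact C1. }
    destruct (Rle_or_lt dA 0).
    - assert (sqrt 3 * dA <= 0) by nra. lra.
    - apply le_of_sq; [lra|]. rewrite Hdd.
      replace (sqrt 3 * dA * (sqrt 3 * dA)) with (3*(dA*dA)) by (transitivity ((sqrt 3 * sqrt 3)*(dA*dA)); [rewrite S3; ring | ring]). nra. }
  assert (F2 : sqrt 3 * dB <= Rabs D).
  { assert (C1 : cos be <= 1/2).
    { pose proof cos_PI3 as CP. destruct (Rle_lt_or_eq_dec _ _ Hb1) as [Hl|He].
      - assert (cos be < cos (PI/3)) by (apply cos_decreasing_1; lra). lra.
      - rewrite <- He; lra. }
    rewrite CB in C1.
    assert (dB <= a*c/2).
    { apply (Rmult_le_reg_r (/(a*c))). apply Rinv_0_lt_compat; nra.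
      replace (a*c/2 * /(a*c)) with (1/2) by (field; lra). exact C1. }
    destruct (Rle_or_lt dB 0).
    - assert (sqrt 3 * dB <= 0) by nra. lra.
    - apply le_of_sq; [lra|]. rewrite Hdd.
      replace (sqrt 3 * dB * (sqrt 3 * dB)) with (3*(dB*dB)) by (transitivity ((sqrt 3 * sqrt 3)*(dB*dB)); [rewrite S3; ring | ring]). nra. }
  assert (Ccos : cos (al + be) = - g / (a*b)).
  { rewrite cos_plus, CA, CB, SA, SB.
    replace (dA / (c * b) * (dB / (a * c)) - Rabs D / (c * b) * (Rabs D / (a * c)))
      with ((dA*dB - Rabs D * Rabs D)/(a*b*(c*c))) by (field; lra).
    rewrite Hdd, E4. field. lra. }
  assert (Csin : sin (al + be) = Rabs D / (a*b)).
  { rewrite sin_plus, CA, CB, SA, SB.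
    replace (Rabs D / (c * b) * (dB / (a * c)) + dA / (c * b) * (Rabs D / (a * c)))
      with (Rabs D * (dA + dB)/(a*b*(c*c))) by (field; lra).
    rewrite E3. field. lra. }
  assert (F3 : g > a*b/2 /\ Rabs D <= sqrt 3 * g).
  { assert (cos (al + be) < cos (2*(PI/3))).
    { apply cos_decreasing_1; lra. }
    rewrite cos_2a_cos, cos_PI3, Ccos in H.
    assert (g > a*b/2).
    { assert (g/(a*b) > 1/2) by lra.
      apply (Rmult_lt_reg_r (/(a*b))). apply Rinv_0_lt_compat; nra.
      replace (a*b/2 * /(a*b)) with (1/2) by (field; lra). exact H0. }
    split; [exact H0|].
    assert (0 < a*b) by (apply Rmult_lt_0_compat; lra). apply le_of_sq; [apply Rmult_le_pos; lra|]. rewrite Hdd.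
    replace (sqrt 3 * g * (sqrt 3 * g)) with (3*(g*g)) by (transitivity ((sqrt 3 * sqrt 3)*(g*g)); [rewrite S3; ring | ring]).
    nra. }
  destruct F3 as [F3a F3b].
  assert (Hsin : sin al <= sin (al + be - PI/3)).
  { pose proof (form4 (al + be - PI/3) al) as F.
    assert (0 < cos ((al + be - PI / 3 + al) / 2)) by (apply cos_gt_0; lra).
    assert (0 <= sin ((al + be - PI / 3 - al) / 2)) by (apply sin_ge_0; lra).
    nra. }
  rewrite sin_minus, Csin, Ccos, cos_PI3, sin_PI3, SA in Hsin.
  assert (2*a*Rabs D <= c*(Rabs D + sqrt 3 * g)).
  { apply (Rmult_le_reg_r (/(2*a*b*c))). apply Rinv_0_lt_compat; repeat apply Rmult_lt_0_compat; lra.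
    replace (2*a*Rabs D * /(2*a*b*c)) with (Rabs D / (c*b)) by (field; lra).
    replace (c * (Rabs D + sqrt 3 * g) * / (2 * a * b * c)) with
      (Rabs D / (a * b) * (1 / 2) - - g / (a * b) * (sqrt 3 / 2)) by (field; lra).
    exact Hsin. }
  assert (0 < a*b) by (apply Rmult_lt_0_compat; lra). repeat split; lra.
Qed.


Lemma on_seg_l (P Q : pt) : on_seg P Q P.
Proof. exists 0. split; [lra|]. destruct P; cbn [fst snd]; apply pair_eq; ring. Qed.
Lemma on_seg_r (P Q : pt) : on_seg P Q Q.
Proof. exists 1. split; [lra|]. destruct Q; cbn [fst snd]; apply pair_eq; ring. Qed.

Lemma area_sqd (P Q S : pt) : equilateral P Q S -> area P Q S = sqrt 3 / 4 * sqd P Q.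
Proof. intros H. rewrite equi_area by exact H. reflexivity. Qed.

Lemma wet_corner (A B C X X' O Y Z : pt) :
  (forall M, in_tri O Y Z M -> in_tri A B C M) ->
  (forall M, in_tri A B C M -> in_tri O Y Z M) ->
  (forall M, on_seg O Y M -> on_seg X X' M) ->
  (forall M, on_seg X X' M -> on_seg O Y M) ->
  det3 O Y Z <> 0 -> Rabs (det3 O Y Z) <= sqrt 3 * dotv O Y Z ->
  sqrt 3 * (sqd O Y - dotv O Y Z) <= Rabs (det3 O Y Z) ->
  is_WET_area A B C X X'
    (sqrt 3 / 4 * (4 * sqd O Y * (det3 O Y Z)^2 / (Rabs (det3 O Y Z) + sqrt 3 * dotv O Y Z)^2)).
Proof.
  intros HT1 HT2 HS1 HS2 HD H1 H2. split.
  - destruct (exist_corner O Y Z HD H1 H2) as (P & Q & S & He & HP & HQ & HP' & HQ' & HS & Hsq).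
    exists P, Q, S. split.
    + split; [exact He|split].
      * intros M HM. apply (in_tri_convex A B C P Q S M); auto.
      * intros M HM. apply (on_seg_convex X X' P Q M); auto.
    + rewrite area_sqd by exact He. rewrite Hsq. reflexivity.
  - intros P Q S [He [Hin Hon]].
    assert (HP : on_seg O Y P) by (apply HS2, Hon, on_seg_l).
    assert (HQ : on_seg O Y Q) by (apply HS2, Hon, on_seg_r).
    assert (HS : in_tri O Y Z S) by (apply HT2, Hin, in_tri_vert3).
    assert (Hd0 : 0 < Rabs (det3 O Y Z)) by (apply Rabs_pos_lt; exact HD).
    assert (Hden : 0 < Rabs (det3 O Y Z) + sqrt 3 * dotv O Y Z) by lra.
    pose proof (ub_geo O Y Z P Q S HD Hden HP HQ HS He) as U.
    rewrite area_sqd by exact He.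
    pose proof sqrt3_pos.
    apply Rmult_le_compat_l; [lra|].
    apply (Rmult_le_reg_r ((Rabs (det3 O Y Z) + sqrt 3 * dotv O Y Z)^2)); [nra|].
    unfold Rdiv. rewrite Rmult_assoc, Rinv_l; [lra|]. apply pow_nonzero. lra.
Qed.

Lemma wet_full (A B C X X' O Y Z : pt) :
  (forall M, in_tri O Y Z M -> in_tri A B C M) ->
  (forall M, on_seg O Y M -> on_seg X X' M) ->
  (forall M, on_seg X X' M -> on_seg O Y M) ->
  det3 O Y Z <> 0 -> sqrt 3 * dotv O Y Z <= Rabs (det3 O Y Z) ->
  sqrt 3 * (sqd O Y - dotv O Y Z) <= Rabs (det3 O Y Z) ->
  is_WET_area A B C X X' (sqrt 3 / 4 * sqd O Y).
Proof.
  intros HT1 HS1 HS2 HD H1 H2. split.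
  - destruct (exist_full O Y Z HD H1 H2) as (P & Q & S & He & HP & HQ & HP' & HQ' & HS & Hsq).
    exists P, Q, S. split.
    + split; [exact He|split].
      * intros M HM. apply (in_tri_convex A B C P Q S M); auto.
      * intros M HM. apply (on_seg_convex X X' P Q M); auto.
    + rewrite area_sqd by exact He. rewrite Hsq. reflexivity.
  - intros P Q S [He [Hin Hon]].
    assert (HP : on_seg O Y P) by (apply HS2, Hon, on_seg_l).
    assert (HQ : on_seg O Y Q) by (apply HS2, Hon, on_seg_r).
    pose proof (ub_full O Y P Q HP HQ).
    rewrite area_sqd by exact He.
    pose proof sqrt3_pos.
    apply Rmult_le_compat_l; lra.
Qed.


Lemma pdist_sym (P Q : pt) : pdist P Q = pdist Q P.
Proof. unfold pdist. f_equal. ring. Qed.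

Lemma pdist_sqd (P Q : pt) : pdist P Q * pdist P Q = sqd P Q.
Proof. rewrite pdist_sq. unfold sqd. ring. Qed.

Lemma pdist_pos (P Q : pt) : 0 < sqd P Q -> 0 < pdist P Q.
Proof. intros H. unfold pdist. apply sqrt_lt_R0. unfold sqd in H. 
  replace ((fst P - fst Q) ^ 2 + (snd P - snd Q) ^ 2) with ((fst Q - fst P) ^ 2 + (snd Q - snd P) ^ 2) by ring. exact H. Qed.

Lemma key_a (A B C : pt) : det3 A B C <> 0 -> 0 < dotv C A B ->
  2 * pdist B C * Rabs (det3 A B C) <= pdist A B * (Rabs (det3 A B C) + sqrt 3 * dotv C A B) ->
  4 * sqd C B * (det3 C B A)^2 / (Rabs (det3 A B C) + sqrt 3 * dotv C A B)^2 <= sqd A B.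
Proof.
  intros HD Hg F4.
  pose proof sqrt3_pos. pose proof (Rabs_pos_lt _ HD) as Hd0.
  set (den := Rabs (det3 A B C) + sqrt 3 * dotv C A B) in *.
  assert (Hden : 0 < den) by (unfold den; nra).
  assert (Hx : 4 * sqd C B * (det3 C B A)^2 = (2 * pdist B C * Rabs (det3 A B C)) * (2 * pdist B C * Rabs (det3 A B C))).
  { replace ((2 * pdist B C * Rabs (det3 A B C)) * (2 * pdist B C * Rabs (det3 A B C)))
      with (4 * (pdist B C * pdist B C) * (Rabs (det3 A B C) * Rabs (det3 A B C))) by ring.
    rewrite pdist_sqd, <- Rabs_mult, Rabs_pos_eq by apply Rle_0_sqr. unfold sqd, det3. ring. }
  rewrite Hx, <- pdist_sqd.
  assert (0 <= 2 * pdist B C * Rabs (det3 A B C)).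
  { pose proof (Rabs_pos (det3 A B C)). unfold pdist. pose proof (sqrt_pos ((fst B - fst C) ^ 2 + (snd B - snd C) ^ 2)). 
    apply Rmult_le_pos; [lra|]. auto. }
  apply (Rmult_le_reg_r (den^2)); [nra|].
  unfold Rdiv. rewrite Rmult_assoc, Rinv_l by (apply pow_nonzero; lra).
  replace (pdist A B * pdist A B * den^2) with ((pdist A B * den)*(pdist A B * den)) by ring.
  rewrite Rmult_1_r. apply Rmult_le_compat; lra.
Qed.

Lemma key_b (A B C : pt) : det3 A B C <> 0 -> 0 < dotv C A B -> pdist B C > pdist A C ->
  4 * sqd C A * (det3 A B C)^2 / (Rabs (det3 A B C) + sqrt 3 * dotv C A B)^2 <=
  4 * sqd C B * (det3 C B A)^2 / (Rabs (det3 A B C) + sqrt 3 * dotv C A B)^2.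
Proof.
  intros HD Hg Hab.
  pose proof sqrt3_pos. pose proof (Rabs_pos_lt _ HD) as Hd0.
  assert (0 < Rabs (det3 A B C) + sqrt 3 * dotv C A B) by nra.
  unfold Rdiv. apply Rmult_le_compat_r; [left; apply Rinv_0_lt_compat; nra|].
  replace ((det3 C B A)^2) with ((det3 A B C)^2) by (unfold det3; ring).
  apply Rmult_le_compat_r; [apply pow2_ge_0|].
  apply Rmult_le_compat_l; [lra|].
  replace (sqd C A) with (pdist A C * pdist A C) by (rewrite pdist_sqd; unfold sqd; ring).
  replace (sqd C B) with (pdist B C * pdist B C) by (rewrite pdist_sqd; unfold sqd; ring).
  assert (0 <= pdist A C) by (unfold pdist; apply sqrt_pos).
  apply Rmult_le_compat; lra.
Qed.

Theorem mainTheorem2 (A B C : pt) :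
  det3 A B C <> 0 ->
  pdist B C > pdist C A -> pdist C A > pdist A B ->
  PI / 3 <= angle B C A -> angle B C A < 4 * PI / 9 ->
  PI / 3 < angle A B C -> angle A B C < PI / 2 ->
  angle A B C + angle B C A / 2 < 2 * PI / 3 ->
  exists Wa Wb Wc : R,
    is_WET_area A B C B C Wa /\
    is_WET_area A B C C A Wb /\
    is_WET_area A B C A B Wc /\
    Wa <= Wc /\ Wb <= Wc /\
    Wb <= Wa.
Proof.
  intros HD Hab Hbc Hb1 Hb2 Ha1 Ha2 H12.
  unfold angle in *.
  change (((fst B - fst A) * (fst C - fst A) + (snd B - snd A) * (snd C - snd A))) with (dotv A B C) in *.
  change (((fst C - fst B) * (fst A - fst B) + (snd C - snd B) * (snd A - snd B))) with (dotv B C A) in *.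
  rewrite (pdist_sym B A) in *.
  rewrite (pdist_sym C A) in *.
  assert (Hc0 : 0 < pdist A B) by (apply pdist_pos, (L2_pos A B C HD)).
  assert (HDc : det3 C A B = det3 A B C) by (unfold det3; ring).
  assert (HDa : det3 C B A = - det3 A B C) by (unfold det3; ring).
  assert (Hb0 : 0 < pdist A C) by (apply pdist_pos, (L2_pos A C B); unfold det3 in *; intro; apply HD; lra).
  assert (Ha0 : 0 < pdist B C) by (apply pdist_pos, (L2_pos B C A); unfold det3 in *; intro; apply HD; lra).
  pose proof (pdist_sqd A B) as Sc. pose proof (pdist_sqd A C) as Sb. pose proof (pdist_sqd B C) as Sa.
  assert (E1 : det3 A B C * det3 A B C + dotv A B C * dotv A B C = (pdist A B * pdist A C) * (pdist A B * pdist A C)).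
  { replace ((pdist A B * pdist A C) * (pdist A B * pdist A C)) with ((pdist A B * pdist A B) * (pdist A C * pdist A C)) by ring.
    rewrite Sc, Sb. unfold det3, dotv, sqd. ring. }
  assert (E2 : det3 A B C * det3 A B C + dotv B C A * dotv B C A = (pdist B C * pdist A B) * (pdist B C * pdist A B)).
  { replace ((pdist B C * pdist A B) * (pdist B C * pdist A B)) with ((pdist B C * pdist B C) * (pdist A B * pdist A B)) by ring.
    rewrite Sc, Sa. unfold det3, dotv, sqd. ring. }
  assert (E3 : dotv A B C + dotv B C A = pdist A B * pdist A B).
  { rewrite Sc. unfold dotv, sqd. ring. }
  assert (E4 : dotv A B C * dotv B C A - det3 A B C * det3 A B C = - (dotv C A B * (pdist A B * pdist A B))).
  { rewrite Sc. unfold dotv, det3, sqd. ring. }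
  assert (E5 : det3 A B C * det3 A B C + dotv C A B * dotv C A B = (pdist B C * pdist A C) * (pdist B C * pdist A C)).
  { replace ((pdist B C * pdist A C) * (pdist B C * pdist A C)) with ((pdist B C * pdist B C) * (pdist A C * pdist A C)) by ring.
    rewrite Sa, Sb. unfold det3, dotv, sqd. ring. }
  destruct (trig_facts (pdist B C) (pdist A C) (pdist A B) (det3 A B C) (dotv A B C) (dotv B C A) (dotv C A B)
     Ha0 Hb0 Hc0 HD E1 E2 E3 E4 E5 Hb1 Hb2 Ha1 Ha2 H12) as (F1 & F2 & F3 & Fg & F4).
  exists (sqrt 3 / 4 * (4 * sqd C B * (det3 C B A)^2 / (Rabs (det3 C B A) + sqrt 3 * dotv C B A)^2)).
  exists (sqrt 3 / 4 * (4 * sqd C A * (det3 C A B)^2 / (Rabs (det3 C A B) + sqrt 3 * dotv C A B)^2)).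
  exists (sqrt 3 / 4 * sqd A B).
  assert (Gb : dotv C B A = dotv C A B) by (unfold dotv; ring).
  assert (RDa : Rabs (det3 C B A) = Rabs (det3 A B C)) by (rewrite HDa; apply Rabs_Ropp).
  split; [|split; [|split; [|split; [|split]]]].
  - apply (wet_corner A B C B C C B A).
    + intros M HM. apply in_tri_swap, in_tri_cyc, HM.
    + intros M HM. apply in_tri_swap, in_tri_cyc, HM.
    + intros M HM. apply on_seg_sym, HM.
    + intros M HM. apply on_seg_sym, HM.
    + rewrite HDa. intro; apply HD; lra.
    + rewrite RDa, Gb. exact F3.
    + rewrite RDa. replace (sqd C B - dotv C B A) with (dotv B C A) by (unfold sqd, dotv; ring). exact F2.
  - apply (wet_corner A B C C A C A B).
    + intros M HM. apply in_tri_cyc, HM.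
    + intros M HM. apply in_tri_cyc, in_tri_cyc, HM.
    + auto.
    + auto.
    + rewrite HDc. exact HD.
    + rewrite HDc. exact F3.
    + rewrite HDc. replace (sqd C A - dotv C A B) with (dotv A B C) by (unfold sqd, dotv; ring). exact F1.
  - apply (wet_full A B C A B A B C).
    + auto.
    + auto.
    + auto.
    + exact HD.
    + exact F1.
    + replace (sqd A B - dotv A B C) with (dotv B C A) by (unfold sqd, dotv; ring). exact F2.
  - rewrite RDa, Gb. apply Rmult_le_compat_l; [pose proof sqrt3_pos; lra|]. apply key_a; auto.
  - rewrite HDc. apply Rle_trans with (4 * sqd C B * (det3 C B A)^2 / (Rabs (det3 C B A) + sqrt 3 * dotv C B A)^2 * (sqrt 3 / 4)).
    + rewrite RDa, Gb. rewrite Rmult_comm. apply Rmult_le_compat_r; [pose proof sqrt3_pos; lra|]. apply key_b; auto.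
    + rewrite Rmult_comm. apply Rmult_le_compat_l; [pose proof sqrt3_pos; lra|]. rewrite RDa, Gb. apply key_a; auto.
  - rewrite HDc, RDa, Gb. apply Rmult_le_compat_l; [pose proof sqrt3_pos; lra|]. apply key_b; auto.
Qed.
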